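(* Let $\mathcal{U}$ be an age, let $\mathcal{C}\subseteq\mathcal{U}$ be a Fraïssé class whose Fraïssé limit is locally finite and has an oligomorphic automorphism group, let $\mathbf{T}\in\overline{\mathcal{U}}$, and let $u:\mathbf{V}\to\mathbf{T}$ be a universal homogeneous homomorphism to $\mathbf{T}$ within $\overline{\mathcal{C}}$. If $\operatorname{Aut}(\mathbf{T})$ is oligomorphic, then $\operatorname{Aut}(\mathbf{V})$ is oligomorphic.
   Context: An embedding is an injective homomorphism reflecting all relations. An age is a class of finitely generated structures of one signature with countably many isomorphism types, closed under finitely generated substructures (up to isomorphism) and with the joint embedding property; for an age $\mathcal{C}$, $\overline{\mathcal{C}}$ is the class of countable structures all of whose finitely generated substructures are isomorphic to members of $\mathcal{C}$. A Fraïssé class is an age with the amalgamation property, and its Fraïssé limit is the unique countable homogeneous structure (every isomorphism between finitely generated substructures extends to an automorphism) with that age. A structure is locally finite if all finitely generated substructures are finite. A permutation group on $\Omega$ is oligomorphic if for every $n\ge1$ its coordinatewise action on $\Omega^n$ has finitely many orbits. For $\mathbf{V}\in\overline{\mathcal{C}}$ and a countable $\mathbf{T}$, a homomorphism $u:\mathbf{V}\to\mathbf{T}$ is universal within $\overline{\mathcal{C}}$ if for every $\mathbf{A}\in\overline{\mathcal{C}}$ and homomorphism $h:\mathbf{A}\to\mathbf{T}$ there is an embedding $\iota:\mathbf{A}\hookrightarrow\mathbf{V}$ with $h=u\circ\iota$; homogeneous if for every finitely generated $\mathbf{A}\le\mathbf{V}$ and embedding $\iota:\mathbf{A}\hookrightarrow\mathbf{V}$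 with $u\circ\iota=u\restriction_A$ there is an automorphism $\alpha$ of $\mathbf{V}$ with $u\circ\alpha=u$ and $\alpha\restriction_A=\iota$. *)

(* Defs.v *)
From Stdlib Require Import List.
From mathcomp Require Import all_boot.
Set Implicit Arguments.
Unset Strict Implicit.
Unset Printing Implicit Defensive.

Record signature := Signature {
  fsym : Type; farity : fsym -> nat;
  rsym : Type; rarity : rsym -> nat }.

Record structure (L : signature) := Structure {
  carrier :> Type;
  fint : forall f : fsym L, ('I_(farity f) -> carrier) -> carrier;
  rint : forall r : rsym L, ('I_(rarity r) -> carrier) -> Prop }.

Section Structures.
Variable L : signature.
Implicit Types A B D F V T : structure L.

Definition is_hom A B (h : A -> B) : Prop :=
  (forall f (a : 'I_(farity f) -> A), h (fint a) = fint (fun i => h (a i))) /\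
  (forall r (a : 'I_(rarity r) -> A), rint a -> rint (fun i => h (a i))).

Definition is_emb A B (h : A -> B) : Prop :=
  injective h /\
  (forall f (a : 'I_(farity f) -> A), h (fint a) = fint (fun i => h (a i))) /\
  (forall r (a : 'I_(rarity r) -> A), rint a <-> rint (fun i => h (a i))).

Definition is_iso A B (h : A -> B) : Prop := is_emb h /\ forall y, exists x, h x = y.
Definition isomorphic A B : Prop := exists h : A -> B, is_iso h.
Definition is_aut A (h : A -> A) : Prop := is_iso h.

Definition closed A (S : A -> Prop) : Prop :=
  forall f (a : 'I_(farity f) -> A), (forall i, S (a i)) -> S (fint a).

Definition gen A (l : seq A) (x : A) : Prop :=
  forall S : A -> Prop, closed S -> (forall y, List.In y l -> S y) -> S x.

Lemma gen_closed A (l : seq A) : closed (gen l).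
Proof. intros f a Ha S HS Hl. apply HS => i. exact: (Ha i S HS Hl). Qed.

Definition sub_struct A (S : A -> Prop) (HS : closed S) : structure L :=
  @Structure L {x : A | S x}
    (fun f a => exist S (fint (fun i => proj1_sig (a i)))
                        (HS f _ (fun i => proj2_sig (a i))))
    (fun r a => rint (fun i => proj1_sig (a i))).

Definition fg_sub A (l : seq A) : structure L := @sub_struct A (gen l) (@gen_closed A l).

Definition fin_gen A : Prop := exists l : seq A, forall x, gen l x.
Definition countable_struct A : Prop := exists g : A -> nat, injective g.
Definition locally_finite A : Prop :=
  forall l : seq A, exists m : seq A, forall x, gen l x -> List.In x m.

Definition oligomorphic A : Prop :=
  forall n, 0 < n -> exists (N : nat) (reps : 'I_N -> 'I_n -> A),
    forall x : 'I_n -> A, exists (i : 'I_N) (al : A -> A),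
      is_aut al /\ forall j, al (reps i j) = x j.

Definition is_age (C : structure L -> Prop) : Prop :=
  (forall A, C A -> fin_gen A) /\
  (exists s : nat -> structure L, forall A, C A -> exists k, isomorphic A (s k)) /\
  (forall A (l : seq A), C A -> exists B, C B /\ isomorphic (fg_sub l) B) /\
  (forall A B, C A -> C B -> exists D, C D /\
     exists (f : A -> D) (g : B -> D), is_emb f /\ is_emb g).

Definition amalgamation (C : structure L -> Prop) : Prop :=
  forall A B1 B2 (f1 : A -> B1) (f2 : A -> B2), C A -> C B1 -> C B2 ->
    is_emb f1 -> is_emb f2 ->
    exists D, C D /\ exists (g1 : B1 -> D) (g2 : B2 -> D),
      is_emb g1 /\ is_emb g2 /\ forall x, g1 (f1 x) = g2 (f2 x).

Definition fraisse_class (C : structure L -> Prop) : Prop :=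
  is_age C /\ amalgamation C.

Definition cbar (C : structure L -> Prop) A : Prop :=
  countable_struct A /\
  forall l : seq A, exists B, C B /\ isomorphic (fg_sub l) B.

Definition homogeneous A : Prop :=
  forall (l : seq A) (iota : fg_sub l -> A), is_emb iota ->
    exists al : A -> A, is_aut al /\ forall x, al (proj1_sig x) = iota x.

Definition has_age (C : structure L -> Prop) F : Prop :=
  (forall l : seq F, exists B, C B /\ isomorphic (fg_sub l) B) /\
  (forall B, C B -> exists l : seq F, isomorphic B (fg_sub l)).

Definition fraisse_limit (C : structure L -> Prop) F : Prop :=
  countable_struct F /\ homogeneous F /\ has_age C F.

Definition universal_within (C : structure L -> Prop) V T (u : V -> T) : Prop :=
  forall A, cbar C A -> forall h : A -> T, is_hom h ->
    exists iota : A -> V, is_emb iota /\ forall x, h x = u (iota x).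

Definition hom_homogeneous V T (u : V -> T) : Prop :=
  forall (l : seq V) (iota : fg_sub l -> V), is_emb iota ->
    (forall x, u (iota x) = u (proj1_sig x)) ->
    exists al : V -> V, is_aut al /\ (forall x, u (al x) = u x) /\
      forall x, al (proj1_sig x) = iota x.

End Structures.

(* Main.v *)
Require Import Defs.
From mathcomp Require Import all_boot.
Require Import Defs.
From Stdlib Require Import ProofIrrelevance ClassicalEpsilon FunctionalExtensionality.
From Stdlib Require List.
Set Implicit Arguments.
Unset Strict Implicit.
Unset Printing Implicit Defensive.

Lemma cid_fun (X Y : Type) (P : X -> Y -> Prop) :
  (forall a, exists b, P a b) -> exists f : X -> Y, forall a, P a (f a).
Proof.
move=> H; exists (fun a => proj1_sig (constructive_indefinite_description _ (H a))).
move=> a; exact: proj2_sig (constructive_indefinite_description _ (H a)).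
Qed.

Definition pemb (L : signature) (A B : structure L) (D : A -> Prop) (e : A -> B) : Prop :=
  (forall x y, D x -> D y -> e x = e y -> x = y) /\
  (forall f (a : 'I_(farity f) -> A), (forall i, D (a i)) -> e (fint a) = fint (fun i => e (a i))) /\
  (forall r (a : 'I_(rarity r) -> A), (forall i, D (a i)) -> (rint a <-> rint (fun i => e (a i)))).

Definition Im (L : signature) (A B : structure L) (D : A -> Prop) (e : A -> B) (z : B) : Prop :=
  exists w, D w /\ e w = z.

Lemma gen_in (L : signature) (A : structure L) (l : seq A) y : List.In y l -> gen l y.
Proof. by move=> Hy S _ Hl; apply: Hl. Qed.

Lemma gen_min (L : signature) (A : structure L) (l : seq A) (S : A -> Prop) :
  closed S -> (forall y, List.In y l -> S y) -> forall x, gen l x -> S x.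
Proof. by move=> HS Hl x Hx; apply: Hx. Qed.

Lemma gen_sub (L : signature) (A : structure L) (l l' : seq A) :
  (forall y, List.In y l -> gen l' y) -> forall x, gen l x -> gen l' x.
Proof. move=> H; apply: gen_min => //; exact: gen_closed. Qed.

Lemma gen_img_fwd (L : signature) (A B : structure L) (l : seq A) (e : A -> B) :
  (forall f (a : 'I_(farity f) -> A), (forall i, gen l (a i)) -> e (fint a) = fint (fun i => e (a i))) ->
  forall z, gen l z -> gen (List.map e l) (e z).
Proof.
move=> He z Hz.
have: gen l z /\ gen (List.map e l) (e z).
  apply: (gen_min (S := fun z => gen l z /\ gen (List.map e l) (e z))) Hz.
  - move=> f a Ha; split; first by apply: gen_closed => i; case: (Ha i).
    rewrite He; last by move=> i; case: (Ha i).
    by apply: gen_closed => i; case: (Ha i).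
  - move=> y Hy; split; first exact: gen_in.
    by apply: gen_in; apply: List.in_map.
by case.
Qed.

Lemma gen_img_back (L : signature) (A B : structure L) (l : seq A) (e : A -> B) :
  (forall f (a : 'I_(farity f) -> A), (forall i, gen l (a i)) -> e (fint a) = fint (fun i => e (a i))) ->
  forall w, gen (List.map e l) w -> Im (gen l) e w.
Proof.
move=> He; apply: gen_min.
- move=> f a Ha; have [b Hb] := cid_fun Ha.
  exists (fint b); split; first by apply: gen_closed => i; case: (Hb i).
  rewrite He; last by move=> i; case: (Hb i).
  congr fint; apply: functional_extensionality => i; by case: (Hb i).
- move=> y /List.in_map_iff [x [<- Hx]]; exists x; split => //; exact: gen_in.
Qed.

Lemma pinv (L : signature) (A B : structure L) (D : A -> Prop) (e : A -> B) (a0 : A) :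
  closed D -> pemb D e -> exists t : B -> A,
   (forall z, Im D e z -> D (t z) /\ e (t z) = z) /\ closed (Im D e) /\ pemb (Im D e) t.
Proof.
move=> HD [Hi [Hf Hr]].
  have H : forall z, exists w, Im D e z -> D w /\ e w = z.
    move=> z; case: (classic (Im D e z)) => [[w Hw]|N]; first by exists w.
    by exists a0.
  have [t Ht] := cid_fun H.
  have Hcl : closed (Im D e).
    move=> f a Ha; exists (fint (fun i => t (a i))); split.
      by apply: HD => i; case: (Ht _ (Ha i)).
    rewrite Hf; last by move=> i; case: (Ht _ (Ha i)).
    congr fint; apply: functional_extensionality => i; by case: (Ht _ (Ha i)).
  exists t; split => //; split => //; split.
  + move=> x y Hx Hy Hxy; case: (Ht _ Hx) => _ <-; case: (Ht _ Hy) => _ <-; by rewrite Hxy.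
  split.
  + move=> f a Ha.
    have Hfa := Hcl f a Ha.
    case: (Ht _ Hfa) => D1 E1.
    apply: Hi => //; first by apply: HD => i; case: (Ht _ (Ha i)).
    rewrite E1 Hf; last by move=> i; case: (Ht _ (Ha i)).
    congr fint; apply: functional_extensionality => i; by case: (Ht _ (Ha i)).
  + move=> r a Ha.
    rewrite (Hr r (fun i => t (a i))); last by move=> i; case: (Ht _ (Ha i)).
    have -> : (fun i => e (t (a i))) = a.
      apply: functional_extensionality => i; by case: (Ht _ (Ha i)).
    done.
Qed.

Lemma pemb_mono (L : signature) (A B : structure L) (D D' : A -> Prop) (e : A -> B) :
  pemb D e -> (forall x, D' x -> D x) -> pemb D' e.
Proof.
move=> [Hi [Hf Hr]] H; split; first by move=> x y /H Hx /H Hy; exact: Hi.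
split; first by move=> f a Ha; apply: Hf => i; apply: H.
by move=> r a Ha; apply: Hr => i; apply: H.
Qed.

Lemma pemb_comp (L : signature) (A B C : structure L) (D : A -> Prop) (E : B -> Prop)
  (e : A -> B) (g : B -> C) :
  pemb D e -> pemb E g -> (forall x, D x -> E (e x)) -> pemb D (fun x => g (e x)).
Proof.
move=> [Hi [Hf Hr]] [Gi [Gf Gr]] H; split.
  by move=> x y Hx Hy /(Gi _ _ (H _ Hx) (H _ Hy)); apply: Hi.
split.
  move=> f a Ha; rewrite Hf // Gf //; by move=> i; apply: H.
move=> r a Ha; rewrite (Hr r a Ha); apply: (Gr r (fun i => e (a i))) => i; exact: H.
Qed.

Lemma emb_pemb (L : signature) (A B : structure L) (D : A -> Prop) (e : A -> B) :
  is_emb e -> pemb D e.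
Proof.
move=> [Hi [Hf Hr]]; split; first by move=> x y _ _; apply: Hi.
by split => [f a _|r a _]; [apply: Hf|apply: Hr].
Qed.

Lemma pemb_emb (L : signature) (A B : structure L) (e : A -> B) :
  pemb (fun _ => True) e -> is_emb e.
Proof.
move=> [Hi [Hf Hr]]; split; first by move=> x y; apply: Hi.
by split => [f a|r a]; [apply: Hf|apply: Hr].
Qed.

Lemma emb_comp (L : signature) (A B C : structure L) (e : A -> B) (g : B -> C) :
  is_emb e -> is_emb g -> is_emb (fun x => g (e x)).
Proof.
move=> He Hg; apply: pemb_emb; apply: (pemb_comp (E := fun _ => True)) => //; exact: emb_pemb.
Qed.

Lemma emb_hom (L : signature) (A B : structure L) (e : A -> B) : is_emb e -> is_hom e.
Proof. move=> [_ [Hf Hr]]; split => // r a; by rewrite Hr. Qed.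

Lemma hom_comp (L : signature) (A B C : structure L) (e : A -> B) (g : B -> C) :
  is_hom e -> is_hom g -> is_hom (fun x => g (e x)).
Proof.
move=> [Hf Hr] [Gf Gr]; split; first by move=> f a; rewrite Hf Gf.
by move=> r a /Hr /Gr.
Qed.

Lemma emb_sub (L : signature) (A B : structure L) (l : seq A) (e : A -> B) :
  pemb (gen l) e -> is_emb (fun s : fg_sub l => e (proj1_sig s)).
Proof.
move=> [Hi [Hf Hr]]; split.
  move=> [x Hx] [y Hy] /= /Hi E; have Exy := E Hx Hy; subst y.
  by rewrite (proof_irrelevance _ Hx Hy).
split.
  move=> f a /=; rewrite Hf //; move=> i; exact: proj2_sig (a i).
move=> r a /=; apply: Hr => i; exact: proj2_sig (a i).
Qed.

Lemma id_emb (L : signature) (A : structure L) : is_emb (fun x : A => x).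
Proof. split; first by move=> x y. by split. Qed.

Lemma sval_emb (L : signature) (A : structure L) (l : seq A) :
  is_emb (fun s : fg_sub l => proj1_sig s).
Proof. apply: (emb_sub (e := fun x => x)); exact: emb_pemb (id_emb A). Qed.

Lemma aut_inv (L : signature) (A : structure L) (h : A -> A) :
  is_aut h -> exists h', is_aut h' /\ (forall x, h' (h x) = x) /\ (forall x, h (h' x) = x).
Proof.
move=> [[Hi [Hf Hr]] Hs]; have [h' Hh'] := cid_fun Hs.
have K1 : forall x, h' (h x) = x by move=> x; apply: Hi; rewrite Hh'.
exists h'; split; last by split.
split; last by move=> y; exists (h y).
split; first by move=> x y E; rewrite -(Hh' x) -(Hh' y) E.
split.
  move=> f a; apply: Hi; rewrite Hh' Hf; congr fint.
  by apply: functional_extensionality => i; rewrite Hh'.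
move=> r a; rewrite (Hr r (fun i => h' (a i))).
have -> : (fun i => h (h' (a i))) = a by apply: functional_extensionality => i; rewrite Hh'.
done.
Qed.

Lemma aut_comp (L : signature) (A : structure L) (h g : A -> A) :
  is_aut h -> is_aut g -> is_aut (fun x => g (h x)).
Proof.
move=> [Eh Sh] [Eg Sg]; split; first exact: emb_comp.
move=> y; have [z <-] := Sg y; have [x <-] := Sh z; by exists x.
Qed.

Lemma id_aut (L : signature) (A : structure L) : is_aut (fun x : A => x).
Proof. split; first exact: id_emb. by move=> y; exists y. Qed.

Lemma sub_pemb (L : signature) (A B : structure L) (l : seq A) (j : fg_sub l -> B) (b0 : B) :
  is_emb j -> exists k : A -> B, pemb (gen l) k /\ forall z (H : gen l z), k z = j (exist (gen l) z H).
Proof.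
move=> [Hi [Hf Hr]].
pose k := fun z => match excluded_middle_informative (gen l z) with
                   | left H => j (exist (gen l) z H) | right _ => b0 end.
have Hk : forall z (H : gen l z), k z = j (exist (gen l) z H).
  move=> z H; rewrite /k; case: excluded_middle_informative => // H'.
  by rewrite (proof_irrelevance _ H H').
exists k; split => //; split.
  move=> x y Hx Hy; rewrite (Hk _ Hx) (Hk _ Hy) => /Hi E.
  by have := f_equal (@proj1_sig _ _) E.
split.
  move=> f a Ha; rewrite (Hk _ (gen_closed Ha)).
  have E := Hf f (fun i => exist (gen l) (a i) (Ha i)).
  have -> : (fun i => k (a i)) = (fun i => j (exist (gen l) (a i) (Ha i))).
    by apply: functional_extensionality => i; rewrite (Hk _ (Ha i)).
  rewrite -E; congr j; apply: f_equal; exact: proof_irrelevance.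
move=> r a Ha.
have -> : (fun i => k (a i)) = (fun i => j (exist (gen l) (a i) (Ha i))).
  by apply: functional_extensionality => i; rewrite (Hk _ (Ha i)).
rewrite -Hr; done.
Qed.

Lemma closedT (L : signature) (A : structure L) : closed (fun _ : A => True).
Proof. by []. Qed.

Lemma ext (L : signature) (C : structure L -> Prop) (V T : structure L) (u : V -> T) (v0 : V) :
  cbar C V -> is_hom u -> universal_within C u -> hom_homogeneous u ->
  forall beta : T -> T, is_hom beta ->
  forall (l : seq V) (e : V -> V), pemb (gen l) e -> (forall z, gen l z -> u (e z) = beta (u z)) ->
  exists e', is_emb e' /\ (forall z, u (e' z) = beta (u z)) /\ forall z, gen l z -> e' z = e z.
Proof.
move=> HV Hu HU HH beta Hb l e He Heu.
have [io [Hio Hiou]] := HU V HV (fun z => beta (u z)) (hom_comp Hu Hb).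
have [t [Ht1 [_ Ht3]]] := pinv v0 (@closedT L V) (emb_pemb (fun _ => True) Hio).
have Hiof : forall f (a : 'I_(farity f) -> V), (forall i, gen l (a i)) -> io (fint a) = fint (fun i => io (a i)).
  by move=> f a _; case: Hio => _ [H _]; apply: H.
have Ht2 : forall w, gen (List.map io l) w -> gen l (t w) /\ io (t w) = w.
  move=> w /(gen_img_back Hiof) [z [Hz Ez]].
  have [_ E2] : True /\ io (t w) = w by apply: Ht1; exists z.
  split => //; have -> // : t w = z.
  by case: Hio => Hi _; apply: Hi; rewrite E2.
pose f := fun w => e (t w).
have Hf : pemb (gen (List.map io l)) f.
  apply: (pemb_comp (E := gen l)) => //; last by move=> x /Ht2 [].
  apply: pemb_mono Ht3 _ => w /Ht2 [_ E]; by exists (t w).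
have Hfu : forall s : fg_sub (List.map io l), u (f (proj1_sig s)) = u (proj1_sig s).
  move=> [w Hw] /=; rewrite /f Heu; last by case: (Ht2 _ Hw).
  rewrite Hiou; case: (Ht2 _ Hw) => _ ->; done.
have [eta [Heta [Hetau Heta2]]] := HH (List.map io l) (fun s => f (proj1_sig s)) (emb_sub Hf) Hfu.
exists (fun z => eta (io z)); split; first by apply: emb_comp => //; case: Heta.
split; first by move=> z; rewrite Hetau Hiou.
move=> z Hz.
have Hz' : gen (List.map io l) (io z) by apply: gen_img_fwd.
have := Heta2 (exist _ (io z) Hz') => /= ->.
rewrite /f; congr e; case: Hio => Hi _; apply: Hi; by case: (Ht2 _ Hz').
Qed.

Definition good (L : signature) (V T : structure L) (u : V -> T) (beta : T -> T)
  (l : seq V) (e : V -> V) : Prop :=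
  pemb (gen l) e /\ forall z, gen l z -> u (e z) = beta (u z).

Lemma emb_inj (L : signature) (A B : structure L) (e : A -> B) : is_emb e -> injective e.
Proof. by case. Qed.

Lemma step (L : signature) (C : structure L -> Prop) (V T : structure L) (u : V -> T) (v0 : V) :
  cbar C V -> is_hom u -> universal_within C u -> hom_homogeneous u ->
  forall beta beta' : T -> T, is_aut beta -> is_aut beta' ->
  (forall x, beta' (beta x) = x) -> (forall x, beta (beta' x) = x) ->
  forall (l : seq V) (e : V -> V), good u beta l e -> forall v w : V,
  exists l' e', good u beta l' e' /\ (forall y, gen l y -> gen l' y /\ e' y = e y) /\
    gen l' v /\ Im (gen l') e' w.
Proof.
move=> HV Hu HU HH beta beta' Hb Hb' K1 K2 l e [He Heu] v w.
have Hbh : is_hom beta by case: Hb => /emb_hom.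
have Hbh' : is_hom beta' by case: Hb' => /emb_hom.
have [e1 [He1 [He1u He1e]]] := ext v0 HV Hu HU HH Hbh He Heu.
pose l1 := v :: l.
have Hll1 : forall y, gen l y -> gen l1 y.
  by apply: gen_sub => y Hy; apply: gen_in; right.
have He1p : pemb (gen l1) e1 := emb_pemb _ He1.
have [t [Ht1 [_ Ht3]]] := pinv v0 (@gen_closed L V l1) He1p.
have He1f : forall f (a : 'I_(farity f) -> V), (forall i, gen l1 (a i)) -> e1 (fint a) = fint (fun i => e1 (a i)).
  by move=> f a _; case: He1 => _ [H _]; apply: H.
have Hte : forall y, gen l1 y -> t (e1 y) = y.
  move=> y Hy; have [D1 E1] := Ht1 (e1 y) (ex_intro _ y (conj Hy erefl)).
  by apply: (emb_inj He1).
have Htm : forall w', gen (List.map e1 l1) w' -> Im (gen l1) e1 w' by apply: gen_img_back.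
have Htu : forall w', gen (List.map e1 l1) w' -> u (t w') = beta' (u w').
  move=> w' /Htm Hw'; have [D1 E1] := Ht1 _ Hw'.
  by rewrite -{2}E1 He1u K1.
have [f' [Hf' [Hf'u Hf't]]] := ext v0 HV Hu HU HH Hbh' (pemb_mono Ht3 Htm) Htu.
have Hf'e : forall y, gen l1 y -> f' (e1 y) = y.
  move=> y Hy; rewrite Hf't ?Hte //; exact: gen_img_fwd.
have [nu [Hn1 [Hncl Hn3]]] := pinv v0 (@closedT L V) (emb_pemb (fun _ => True) Hf').
pose l' := f' w :: l1.
have Hl1l' : forall y, gen l1 y -> gen l' y.
  by apply: gen_sub => y Hy; apply: gen_in; right.
have Hl'I : forall y, gen l' y -> Im (fun _ => True) f' y.
  apply: gen_min => // y [<-|Hy]; first by exists w.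
  by exists (e1 y); split => //; apply: Hf'e; apply: gen_in.
have Hnu : forall y, Im (fun _ => True) f' y -> f' (nu y) = y by move=> y /Hn1 [].
exists l', nu; split.
  split; first exact: pemb_mono Hn3 Hl'I.
  move=> y /Hl'I /Hnu Ey.
  by rewrite -{2}Ey Hf'u K2.
split.
  move=> y Hy; split; first by apply: Hl1l'; apply: Hll1.
  have Hy1 := Hll1 _ Hy.
  apply: (emb_inj Hf'); rewrite Hnu; last exact: Hl'I (Hl1l' _ Hy1).
  by rewrite -He1e // Hf'e.
split; first by apply: Hl1l'; apply: gen_in; left.
exists (f' w); split; first by apply: gen_in; left.
apply: (emb_inj Hf'); rewrite Hnu //; by exists w.
Qed.

Lemma lift (L : signature) (C : structure L -> Prop) (V T : structure L) (u : V -> T) :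
  cbar C V -> is_hom u -> universal_within C u -> hom_homogeneous u ->
  forall beta : T -> T, is_aut beta ->
  exists alpha, is_aut alpha /\ forall x, u (alpha x) = beta (u x).
Proof.
move=> HV Hu HU HH beta Hb.
case: (classic (exists v : V, True)) => [[v0 _]|noV]; last first.
  exists (fun x => x); split; first exact: id_aut.
  by move=> x; exfalso; apply: noV; exists x.
have [beta' [Hb' [K1 K2]]] := aut_inv Hb.
have [g Hg] := HV.1.
have Hbh : is_hom beta by case: Hb => /emb_hom.
have [io [Hio Hiou]] := HU V HV (fun z => beta (u z)) (hom_comp Hu Hbh).
pose S := {p : seq V * (V -> V) | good u beta p.1 p.2}.
have s0g : good u beta [::] io.
  split; first exact: emb_pemb.
  by move=> z _; rewrite Hiou.
pose s0 : S := exist _ ([::], io) s0g.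
have Hnext : forall sn : S * nat, exists s' : S,
    (forall y, gen (proj1_sig sn.1).1 y -> gen (proj1_sig s').1 y /\
                (proj1_sig s').2 y = (proj1_sig sn.1).2 y) /\
    (forall v, g v = sn.2 -> gen (proj1_sig s').1 v /\ Im (gen (proj1_sig s').1) (proj1_sig s').2 v).
  move=> [[[l e] Hle] n] /=.
  case: (classic (exists v, g v = n)) => [[v Hv]|nov].
    have [l' [e' [Hg' [Hext [Hv1 Hv2]]]]] := step v0 HV Hu HU HH Hb Hb' K1 K2 Hle v v.
    exists (exist _ (l', e') Hg'); split => // v' /=; rewrite -Hv => /Hg ->; done.
  exists (exist _ (l, e) Hle); split => // v Hv; exfalso; apply: nov; by exists v.
have [nxt Hnxt] := cid_fun Hnext.
pose st := fun n => nat_rect (fun _ => S) s0 (fun m s => nxt (s, m)) n.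
pose Ln := fun n => (proj1_sig (st n)).1.
pose En := fun n => (proj1_sig (st n)).2.
have Hgood : forall n, good u beta (Ln n) (En n) by move=> n; exact: proj2_sig (st n).
have Hmono1 : forall m k y, gen (Ln m) y -> gen (Ln (m + k)) y /\ En (m + k) y = En m y.
  move=> m; elim=> [|k IH] y Hy; first by rewrite addn0.
  have [H1 H2] := IH y Hy.
  rewrite addnS; have [A1 _] := Hnxt (st (m + k), m + k).
  have [B1 B2] := A1 y H1; split => //; rewrite -H2; exact: B2.
have Hmono : forall m N y, m <= N -> gen (Ln m) y -> gen (Ln N) y /\ En N y = En m y.
  move=> m N y HmN Hy; have := Hmono1 m (N - m) y Hy; by rewrite subnKC.
have Hcov : forall v, gen (Ln (g v).+1) v /\ Im (gen (Ln (g v).+1)) (En (g v).+1) v.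
  move=> v; have [_ A2] := Hnxt (st (g v), g v); exact: A2.
pose alpha := fun v => En (g v).+1 v.
have Hal : forall v N, (g v).+1 <= N -> alpha v = En N v /\ gen (Ln N) v.
  move=> v N HN; have [A1 A2] := Hmono _ N v HN (Hcov v).1; by split.
exists alpha; split; last first.
  move=> x; have [A1 A2] := Hal x _ (leqnn _); rewrite A1; exact: (Hgood _).2.
split; first split.
- move=> x y Exy.
  pose N := maxn (g x).+1 (g y).+1.
  have [A1 A2] := Hal x N (leq_maxl _ _).
  have [B1 B2] := Hal y N (leq_maxr _ _).
  have [Hi _] := (Hgood N).1.
  by apply: Hi => //; rewrite -A1 -B1.
- split.
  + move=> f a.
    pose N := maxn (\max_i (g (a i)).+1) (g (fint a)).+1.
    have Hai : forall i, alpha (a i) = En N (a i) /\ gen (Ln N) (a i).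
      move=> i; apply: Hal; apply: leq_trans _ (leq_maxl _ _); exact: (@leq_bigmax _ (fun j => (g (a j)).+1) i).
    have [A1 A2] := Hal (fint a) N (leq_maxr _ _).
    have [_ [Hf _]] := (Hgood N).1.
    rewrite A1 Hf; last by move=> i; case: (Hai i).
    by congr fint; apply: functional_extensionality => i; case: (Hai i).
  + move=> r a.
    pose N := \max_i (g (a i)).+1.
    have Hai : forall i, alpha (a i) = En N (a i) /\ gen (Ln N) (a i).
      move=> i; apply: Hal; exact: (@leq_bigmax _ (fun j => (g (a j)).+1) i).
    have [_ [_ Hr]] := (Hgood N).1.
    rewrite (Hr r a); last by move=> i; case: (Hai i).
    have -> : (fun i => En N (a i)) = (fun i => alpha (a i)).
      by apply: functional_extensionality => i; case: (Hai i).
    done.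
- move=> y; have [_ [z [Hz Ez]]] := Hcov y.
  exists z; pose N := maxn (g z).+1 (g y).+1.
  have [A1 _] := Hal z N (leq_maxl _ _).
  have [_ B2] := Hmono _ N z (leq_maxr _ _) Hz.
  by rewrite A1 B2.
Qed.

Lemma cid_dfun (X : Type) (Y : X -> Type) (P : forall a, Y a -> Prop) :
  (forall a, exists b, P a b) -> exists f : forall a, Y a, forall a, P a (f a).
Proof.
move=> H; exists (fun a => proj1_sig (constructive_indefinite_description _ (H a))).
move=> a; exact: proj2_sig (constructive_indefinite_description _ (H a)).
Qed.

Lemma memIn (X : eqType) (s : seq X) y : y \in s -> List.In y s.
Proof. elim: s => //= a s IH; rewrite in_cons => /orP [/eqP ->|/IH]; by [left|right]. Qed.

Lemma In_enum n (k : 'I_n) : List.In k (enum 'I_n).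
Proof. apply: memIn; by rewrite mem_enum. Qed.

Lemma In_nthS (X : Type) (d : X) (s : seq X) w :
  List.In w s -> exists p, p < size s /\ nth d s p = w.
Proof.
elim: s => //= a s IH [->|/IH [p [Hp E]]]; first by exists 0.
by exists p.+1.
Qed.

Lemma map_mapL (X Y Z : Type) (f : Y -> Z) (g : X -> Y) (s : seq X) :
  List.map f (List.map g s) = List.map (fun k => f (g k)) s.
Proof. by elim: s => //= a s ->. Qed.

Lemma map_extL (X Y : Type) (f g : X -> Y) (s : seq X) :
  (forall k, f k = g k) -> List.map f s = List.map g s.
Proof. by move=> H; elim: s => //= a s ->; rewrite H. Qed.

Lemma decode a b c d M : b < M -> d < M -> a * M + b = c * M + d -> a = c /\ b = d.
Proof.
move=> Hb Hd E.
have M0 : 0 < M by apply: leq_ltn_trans Hb.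
have E1 := congr1 (divn^~ M) E; rewrite /= !divnMDl // !divn_small // !addn0 in E1.
have E2 := congr1 (modn^~ M) E; rewrite /= !modnMDl !modn_small // in E2.
Qed.

Unset Implicit Arguments.
Theorem proposition3p6 (L : signature) (U C : structure L -> Prop)
  (T V : structure L) (u : V -> T) :
  is_age U ->
  fraisse_class C ->
  (forall A, C A -> U A) ->
  (exists F, fraisse_limit C F /\ locally_finite F /\ oligomorphic F) ->
  cbar U T ->
  cbar C V ->
  is_hom u ->
  universal_within C u ->
  hom_homogeneous u ->
  oligomorphic T ->
  oligomorphic V.
Proof.
move=> _ _ _ [F [[_ [_ [_ HFage]]] [HFlf HFol]]] _ HV Hu HU HH HTol n Hn.
pose k0 : 'I_n := Ordinal Hn.
have [NF [rF HrF]] := HFol n Hn.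
pose rl := fun i => List.map (rF i) (enum 'I_n).
have [m Hm] := cid_fun (fun i => HFlf (rl i)).
have Hrl : forall i k, gen (rl i) (rF i k).
  by move=> i k; apply: gen_in; apply: List.in_map; apply: In_enum.
have Hsz : forall i, 0 < size (m i).
  by move=> i; case E: (m i) (Hm i (rF i k0) (Hrl i k0)).
have HT' : forall i, exists w : {N : nat & 'I_N -> 'I_(size (m i)) -> T},
    forall x : 'I_(size (m i)) -> T, exists (j : 'I_(projT1 w)) (al : T -> T),
      is_aut al /\ (forall p, al (projT2 w j p) = x p).
  move=> i; have [N [reps H]] := HTol (size (m i)) (Hsz i).
  by exists (existT _ N reps).
have [W HW] := cid_dfun HT'.
pose NT := fun i => projT1 (W i).
pose tT := fun i => projT2 (W i).
pose M := \max_i NT i.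
pose lx := fun x : 'I_n -> V => List.map x (enum 'I_n).
have Hlx : forall x k, gen (lx x) (x k).
  by move=> x k; apply: gen_in; apply: List.in_map; apply: In_enum.
pose Q := fun (x : 'I_n -> V) (i : 'I_NF) (j : nat) =>
  exists sigma : F -> V, pemb (gen (rl i)) sigma /\ (forall k, sigma (rF i k) = x k) /\
  exists (Hj : j < NT i) (beta : T -> T), is_aut beta /\
    forall p, beta (tT i (Ordinal Hj) p) = u (sigma (nth (rF i k0) (m i) p)).
have ClA : forall x, exists ij : 'I_NF * nat, ij.2 < M /\ Q x ij.1 ij.2.
  move=> x.
  have [B [HB [h1 Hh1]]] := HV.2 (lx x).
  have [l' [h2 Hh2]] := HFage B HB.
  pose kh := fun s : fg_sub (lx x) => proj1_sig (h2 (h1 s)).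
  have Hkh : is_emb kh by exact: (emb_comp (emb_comp Hh1.1 Hh2.1) (sval_emb l')).
  pose f0 : F := kh (exist _ (x k0) (Hlx x k0)).
  have [ka [Hka Hkae]] := sub_pemb f0 Hkh.
  pose y := fun k => ka (x k).
  have [i [de [Hde Hde2]]] := HrF y.
  have [di [Hdi [Kd1 Kd2]]] := aut_inv Hde.
  pose ka' := fun z => di (ka z).
  have Hka' : pemb (gen (lx x)) ka'.
    exact: (pemb_comp (E := fun _ => True) Hka (emb_pemb _ Hdi.1) (fun _ _ => I)).
  have Ekx : forall k, ka' (x k) = rF i k.
    by move=> k; rewrite /ka' -/(y k) -Hde2 Kd1.
  have [sg [Hs1 [_ Hs3]]] := pinv (x k0) (@gen_closed L V (lx x)) Hka'.
  have Hmapk : List.map ka' (lx x) = rl i.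
    by rewrite /lx map_mapL; apply: map_extL.
  have Hsub : forall w, gen (rl i) w -> Im (gen (lx x)) ka' w.
    move=> w; rewrite -Hmapk; apply: gen_img_back => f a Ha.
    by case: Hka' => _ [H _]; apply: H.
  have Hsg : pemb (gen (rl i)) sg := pemb_mono Hs3 Hsub.
  have Hsgr : forall k, sg (rF i k) = x k.
    move=> k; have [D E] := Hs1 _ (Hsub _ (Hrl i k)).
    by case: Hka' => Hi _; apply: Hi => //; rewrite E Ekx.
  pose tau := fun p : 'I_(size (m i)) => u (sg (nth (rF i k0) (m i) p)).
  have [j [be [Hbe Hbe2]]] := HW i tau.
  exists (i, nat_of_ord j); split.
    by apply: leq_trans (ltn_ord j) _; exact: (@leq_bigmax _ NT i).
  exists sg; split => //; split => //.
  exists (ltn_ord j), be; split => // p.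
  have -> : Ordinal (ltn_ord j) = j by apply: val_inj.
  exact: Hbe2.
have ClB : forall x x' i j, Q x i j -> Q x' i j -> exists al, is_aut al /\ forall k, al (x k) = x' k.
  move=> x x' i j [sg [Hsg [Hsgr [Hj [be [Hbe Hbe2]]]]]] [sg' [Hsg' [Hsgr' [Hj' [be' [Hbe' Hbe2']]]]]].
  have EO : Ordinal Hj' = Ordinal Hj by apply: val_inj.
  rewrite EO in Hbe2'.
  have [bi [Hbi [Kb1 Kb2]]] := aut_inv Hbe.
  pose ga := fun t => be' (bi t).
  have Hga : is_aut ga := aut_comp Hbi Hbe'.
  have Kg : forall w, gen (rl i) w -> ga (u (sg w)) = u (sg' w).
    move=> w /(Hm i) /(In_nthS (rF i k0)) [p [Hp <-]].
    have E1 := Hbe2 (Ordinal Hp); have E2 := Hbe2' (Ordinal Hp); simpl in E1, E2.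
    by rewrite -E1 -E2 /ga Kb1.
  have [al [Hal Halu]] := lift HV Hu HU HH Hga.
  have [t' [Ht1 [_ Ht3]]] := pinv (rF i k0) (@gen_closed L F (rl i)) Hsg'.
  have Hmap' : List.map sg' (rl i) = lx x'.
    by rewrite /rl map_mapL; apply: map_extL.
  have Hsub' : forall z, gen (lx x') z -> Im (gen (rl i)) sg' z.
    move=> z; rewrite -Hmap'; apply: gen_img_back => f a Ha.
    by case: Hsg' => _ [H _]; apply: H.
  have Ht'D : forall z, gen (lx x') z -> gen (rl i) (t' z) /\ sg' (t' z) = z.
    by move=> z Hz; apply: Ht1; apply: Hsub'.
  pose io := fun z => al (sg (t' z)).
  have Hio : pemb (gen (lx x')) io.
    apply: (pemb_comp (e := fun z => sg (t' z)) (g := al) (E := fun _ => True)); last by [].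
      apply: (pemb_comp (E := gen (rl i))) => //; first exact: pemb_mono Ht3 Hsub'.
      by move=> z /Ht'D [].
    exact: emb_pemb _ Hal.1.
  have Hiou : forall s : fg_sub (lx x'), u (io (proj1_sig s)) = u (proj1_sig s).
    move=> [z Hz] /=; have [D E] := Ht'D _ Hz.
    by rewrite /io Halu Kg // E.
  have [et [Het [_ Het2]]] := HH (lx x') (fun s => io (proj1_sig s)) (emb_sub Hio) Hiou.
  have Etx : forall k, t' (x' k) = rF i k.
    move=> k; have [D E] := Ht'D _ (Hlx x' k).
    by case: Hsg' => Hi _; apply: Hi => //; rewrite E Hsgr'.
  have Eet : forall k, et (x' k) = al (x k).
    move=> k; have E := Het2 (exist _ (x' k) (Hlx x' k)); simpl in E.
    by rewrite E /io Etx Hsgr.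
  have [ei [Hei [Ke1 Ke2]]] := aut_inv Het.
  exists (fun v => ei (al v)); split; first exact: aut_comp.
  by move=> k; rewrite -Eet Ke1.
have [cls Hcls] := cid_fun ClA.
pose code := fun x => nat_of_ord (cls x).1 * M + (cls x).2.
have Hcode : forall x, code x < NF * M.
  move=> x; rewrite /code; apply: (@leq_trans ((cls x).1.+1 * M)).
    by rewrite mulSnr ltn_add2l; case: (Hcls x).
  by apply: leq_mul => //; apply: ltn_ord.
case: (classic (exists x0 : 'I_n -> V, True)) => [[x0 _]|nox]; last first.
  have reps : 'I_0 -> 'I_n -> V by case=> q; rewrite ltn0.
  exists 0, reps => x; exfalso; apply: nox; by exists x.
have Hr : forall q : 'I_(NF * M), exists r, (exists x, code x = q) -> code r = q.
  move=> q; case: (classic (exists x, code x = q)) => [[x Hx]|N]; first by exists x.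
  by exists x0.
have [reps Hreps] := cid_fun Hr.
exists (NF * M), reps => x.
pose q := Ordinal (Hcode x).
have Er : code (reps q) = code x by apply: Hreps; exists x.
have [D1 D2] := decode (proj1 (Hcls (reps q))) (proj1 (Hcls x)) Er.
have Ec : cls (reps q) = cls x.
  move: D1 D2; case: (cls (reps q)) => a b; case: (cls x) => c d /= /val_inj -> -> //.
have HQ := (Hcls (reps q)).2; rewrite Ec in HQ.
have [al [Hal Hal2]] := ClB _ _ _ _ HQ (Hcls x).2.
by exists q, al.
Qed.
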